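(* Let $\mathsf V$ be a quantale, $f:(X,a)\to(Y,b)$ a $\mathsf V$-functor and $s=(x_n)_{n\in\mathbb N}$ a Cauchy sequence in $X$; let $f(s)=(f(x_n))_{n\in\mathbb N}$. Then $\varphi_{f(s)}=f_*\cdot\varphi_s$ and $\psi_{f(s)}=\psi_s\cdot f^*$, i.e. for all $y\in Y$, $\varphi_{f(s)}(y)=\bigvee_{x\in X}\varphi_s(x)\otimes b(f(x),y)$ and $\psi_{f(s)}(y)=\bigvee_{x\in X}b(y,f(x))\otimes\psi_s(x)$.
   Context: A quantale $(\mathsf V,\otimes,k)$ is a complete anti-symmetric lattice with an associative, commutative operation $\otimes$ with neutral element $k$ distributing over arbitrary suprema. A $\mathsf V$-category $(X,a)$ is a set with $a:X\times X\to\mathsf V$ such that $k\le a(x,x)$ and $a(x,y)\otimes a(y,z)\le a(x,z)$; a $\mathsf V$-functor $f:(X,a)\to(Y,b)$ satisfies $a(x,y)\le b(f(x),f(y))$. A sequence $s=(x_n)$ in $(X,a)$ is Cauchy if $k\le\bigvee_{N}\bigwedge_{n,m\ge N}a(x_n,x_m)$; $\varphi_s(x)=\bigvee_N\bigwedge_{n\ge N}a(x_n,x)$ and $\psi_s(x)=\bigvee_N\bigwedge_{n\ge N}a(x,x_n)$ (similarly in $Y$ with $b$). *)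

(* Defs.v *)
Set Implicit Arguments.

Record Quantale := {
  carrier :> Type;
  qle : carrier -> carrier -> Prop;
  qle_refl : forall x, qle x x;
  qle_trans : forall x y z, qle x y -> qle y z -> qle x z;
  qle_antisym : forall x y, qle x y -> qle y x -> x = y;
  qsup : (carrier -> Prop) -> carrier;
  qsup_ub : forall (S : carrier -> Prop) x, S x -> qle x (qsup S);
  qsup_least : forall (S : carrier -> Prop) y,
      (forall x, S x -> qle x y) -> qle (qsup S) y;
  qtens : carrier -> carrier -> carrier;
  qk : carrier;
  qtens_assoc : forall x y z, qtens x (qtens y z) = qtens (qtens x y) z;
  qtens_comm : forall x y, qtens x y = qtens y x;
  qtens_k : forall x, qtens x qk = x;
  qtens_sup : forall x (S : carrier -> Prop),
      qtens x (qsup S) = qsup (fun z => exists y, S y /\ z = qtens x y)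
}.

Arguments qle {q}. Arguments qsup {q}. Arguments qtens {q}. Arguments qk {q}.

Section Defs.
Context {V : Quantale}.

Definition qSup (I : Type) (f : I -> V) : V := qsup (fun z => exists i, z = f i).
Definition qinf (S : V -> Prop) : V := qsup (fun z => forall x, S x -> qle z x).
Definition qInf (I : Type) (f : I -> V) : V := qinf (fun z => exists i, z = f i).

Definition is_Vcat (X : Type) (a : X -> X -> V) : Prop :=
  (forall x, qle qk (a x x)) /\
  (forall x y z, qle (qtens (a x y) (a y z)) (a x z)).

Definition is_Vfunctor (X Y : Type) (a : X -> X -> V) (b : Y -> Y -> V)
  (f : X -> Y) : Prop := forall x y, qle (a x y) (b (f x) (f y)).

Definition is_Cauchy (X : Type) (a : X -> X -> V) (s : nat -> X) : Prop :=
  qle qk (qSup (fun N : nat =>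
     qInf (fun nm : {p : nat * nat | N <= fst p /\ N <= snd p} =>
              a (s (fst (proj1_sig nm))) (s (snd (proj1_sig nm)))))).

Definition phi_seq (X : Type) (a : X -> X -> V) (s : nat -> X) (x : X) : V :=
  qSup (fun N : nat => qInf (fun n : {n : nat | N <= n} => a (s (proj1_sig n)) x)).

Definition psi_seq (X : Type) (a : X -> X -> V) (s : nat -> X) (x : X) : V :=
  qSup (fun N : nat => qInf (fun n : {n : nat | N <= n} => a x (s (proj1_sig n)))).

End Defs.

(* Main.v *)
Require Import Defs.
From Stdlib Require Import Arith Lia.

Section H.
Context {V : Quantale}.

Lemma tens_mono_r (x y z : V) : qle y z -> qle (qtens x y) (qtens x z).
Proof.
  intro H.
  assert (E : qsup (fun w => w = y \/ w = z) = z).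
  { apply qle_antisym.
    - apply qsup_least. intros w [->| ->]; [exact H| apply qle_refl].
    - apply qsup_ub. now right. }
  rewrite <- E. rewrite qtens_sup.
  apply qsup_ub. exists y. split; auto.
Qed.

Lemma tens_mono (x x' y y' : V) : qle x x' -> qle y y' -> qle (qtens x y) (qtens x' y').
Proof.
  intros H1 H2. apply qle_trans with (qtens x y').
  - now apply tens_mono_r.
  - rewrite (qtens_comm _ x), (qtens_comm _ x'). now apply tens_mono_r.
Qed.

Lemma qSup_ub (I : Type) (f : I -> V) i : qle (f i) (qSup f).
Proof. apply qsup_ub. now exists i. Qed.

Lemma qSup_least (I : Type) (f : I -> V) w : (forall i, qle (f i) w) -> qle (qSup f) w.
Proof. intro H. apply qsup_least. intros x [i ->]. apply H. Qed.

Lemma qInf_lb (I : Type) (f : I -> V) i : qle (qInf f) (f i).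
Proof. apply qsup_least. intros z Hz. apply Hz. now exists i. Qed.

Lemma qInf_greatest (I : Type) (f : I -> V) w : (forall i, qle w (f i)) -> qle w (qInf f).
Proof. intro H. apply qsup_ub. intros x [i ->]. apply H. Qed.

Lemma tens_sup_le_r (I : Type) (f : I -> V) z w :
  (forall i, qle (qtens z (f i)) w) -> qle (qtens z (qSup f)) w.
Proof.
  intro H. unfold qSup. rewrite qtens_sup. apply qsup_least.
  intros x [y [[i ->] ->]]. apply H.
Qed.

Lemma tens_sup_le (I : Type) (f : I -> V) z w :
  (forall i, qle (qtens (f i) z) w) -> qle (qtens (qSup f) z) w.
Proof.
  intro H. rewrite qtens_comm. apply tens_sup_le_r. intro i. rewrite qtens_comm. apply H.
Qed.
End H.

Theorem lemma3p14 (V : Quantale) (X Y : Type) (a : X -> X -> V) (b : Y -> Y -> V)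
  (f : X -> Y) (s : nat -> X) :
  is_Vcat a -> is_Vcat b -> is_Vfunctor a b f -> is_Cauchy a s ->
  (forall y : Y,
     phi_seq b (fun n => f (s n)) y = qSup (fun x : X => qtens (phi_seq a s x) (b (f x) y))) /\
  (forall y : Y,
     psi_seq b (fun n => f (s n)) y = qSup (fun x : X => qtens (b y (f x)) (psi_seq a s x))).
Proof.
  intros Ha [_ Htb] Hf HC. unfold is_Cauchy in HC.
  split; intro y; apply qle_antisym.
  - unfold phi_seq at 1. set (L := qSup _).
    rewrite <- (qtens_k _ L).
    eapply qle_trans; [apply tens_mono_r; exact HC|].
    apply tens_sup_le_r. intro M. rewrite qtens_comm.
    apply tens_sup_le_r. intro N.
    set (p := max N M).
    eapply qle_trans; [|apply (qSup_ub _ _ (s p))].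
    apply tens_mono.
    + unfold phi_seq. eapply qle_trans; [|apply (qSup_ub _ _ M)].
      apply qInf_greatest. intros [n Hn]. simpl.
      assert (Hs : M <= fst (n, p) /\ M <= snd (n, p)) by (simpl; lia).
      exact (qInf_lb _ _ (exist _ (n, p) Hs)).
    + assert (Hp : N <= p) by lia.
      exact (qInf_lb _ _ (exist _ p Hp)).
  - apply qSup_least. intro x. unfold phi_seq at 1. apply tens_sup_le. intro N.
    eapply qle_trans; [|apply (qSup_ub _ _ N)].
    apply qInf_greatest. intros [n Hn]. simpl.
    eapply qle_trans; [apply tens_mono; [apply (qInf_lb _ _ (exist _ n Hn))|apply qle_refl]|].
    simpl. eapply qle_trans; [apply tens_mono; [apply Hf|apply qle_refl]|]. apply Htb.
  - unfold psi_seq at 1. set (L := qSup _).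
    rewrite <- (qtens_k _ L).
    eapply qle_trans; [apply tens_mono_r; exact HC|].
    apply tens_sup_le_r. intro M. rewrite qtens_comm.
    apply tens_sup_le_r. intro N. rewrite qtens_comm.
    set (p := max N M).
    eapply qle_trans; [|apply (qSup_ub _ _ (s p))].
    apply tens_mono.
    + assert (Hp : N <= p) by lia.
      exact (qInf_lb _ _ (exist _ p Hp)).
    + unfold psi_seq. eapply qle_trans; [|apply (qSup_ub _ _ M)].
      apply qInf_greatest. intros [n Hn]. simpl.
      assert (Hs : M <= fst (p, n) /\ M <= snd (p, n)) by (simpl; lia).
      exact (qInf_lb _ _ (exist _ (p, n) Hs)).
  - apply qSup_least. intro x. unfold psi_seq at 1. apply tens_sup_le_r. intro N.
    eapply qle_trans; [|apply (qSup_ub _ _ N)].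
    apply qInf_greatest. intros [n Hn]. simpl.
    eapply qle_trans; [apply tens_mono; [apply qle_refl|apply (qInf_lb _ _ (exist _ n Hn))]|].
    simpl. eapply qle_trans; [apply tens_mono; [apply qle_refl|apply Hf]|]. apply Htb.
Qed.
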